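(* Consider the linear model $y=\mathbf{x}\beta_o+\varepsilon$, where $\mathbf{x}$ is a random $1\times p$ row vector with $\mathbb{E}[\mathbf{x}]=0$ and $\beta_o\in\mathbb{R}^p$ is nonrandom. Assume (i) $\mathbb{E}[\varepsilon\mid\mathbf{x}]=0$ a.s.; (ii) there exist constants $B>0$, $d>2$ such that, uniformly in $n$, $\mathbb{E}[|\varepsilon|^d\mid\mathbf{x}]\le B$ a.s., $\mathbb{E}[|\mathbf{x}\tau|^d]\le B$ and $B^{-1}\le\mathbb{E}[|\mathbf{x}\tau|^2]$ for all $\tau\in\mathcal{S}_p$. Then (a) the minimiser of $Q_o(m\delta)$ over $m\in\mathcal{M}_k$, $\delta\in\Delta$ solves the weighted clustering problem $\min_{m\in\mathcal{M}_k,\delta\in\Delta}\|m\delta-\beta_o\|^2_{\mathbb{E}[\mathbf{x}'\mathbf{x}]}$; and (b) $\|b_k\|^2\asymp\min_{m\in\mathcal{M}_k,\delta\in\Delta}\|m\delta-\beta_o\|^2_{\mathbb{E}[\mathbf{x}'\mathbf{x}]}$.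
   Context: $\|\cdot\|$ is the Euclidean norm; $\mathcal{S}_p=\{\tau\in\mathbb{R}^p:\|\tau\|=1\}$; for a positive definite $W$, $\|v\|_W^2:=v'Wv$. $\mathcal{M}_k$ ($1\le k\le p$) is the set of $p\times k$ binary matrices each of whose rows has exactly one entry $1$ (group assignment of the $p$ coordinates; column sums are group sizes), with standing condition that group sizes for every $m\in\mathcal{M}_k$ are bounded above by a constant $M$ and away from zero uniformly in $p$. $\Delta\subset\mathbb{R}^k$. $(m_o,\delta_o)$ minimises the unweighted $\|m\delta-\beta_o\|^2$ over $m\in\mathcal{M}_k,\delta\in\Delta$ and $b_k:=\beta_o-m_o\delta_o$. $Q_o(m\delta):=\mathbb{E}[(y-\mathbf{x}m\delta)^2]/p$. For nonnegative sequences, $a\lesssim b$ means $a\le cb$ for some finite $c>0$, and $a\asymp b$ means $a\lesssim b$ and $b\lesssim a$. *)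

(* Defs.v *)
From HB Require Import structures.
From mathcomp Require Import all_boot all_order all_algebra.
From mathcomp Require Import all_classical all_reals all_analysis.
Unset Printing Implicit Defensive.
Import Order.TTheory GRing.Theory Num.Theory.
Local Open Scope classical_set_scope.
Local Open Scope ring_scope.

Section Defs.
Context {R : realType}.

Definition sqnorm {n : nat} (v : 'cV[R]_n) : R := \sum_(i < n) (v i 0) ^+ 2.

Definition unit_sphere {n : nat} : set 'cV[R]_n := [set t | sqnorm t = 1].

Definition wsqnorm {n : nat} (W : 'M[R]_n) (v : 'cV[R]_n) : R :=
  ((v^T *m W *m v) 0 0).

Definition assignment {p k : nat} (m : 'M[R]_(p, k)) : Prop :=
  (forall i j, m i j = 0 \/ m i j = 1) /\ (forall i, \sum_(j < k) m i j = 1).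

Definition Mk (p k M : nat) : set 'M[R]_(p, k) :=
  [set m | assignment m /\
           forall j : 'I_k, 1 <= \sum_(i < p) m i j <= M%:R].

Context {d0 : measure_display} {T : measurableType d0}.

Definition xmul {p : nat} (x : 'I_p -> T -> R) (v : 'cV[R]_p) (w : T) : R :=
  \sum_(j < p) x j w * v j 0.

Definition sigma_x {p : nat} (x : 'I_p -> T -> R) : set (set T) :=
  <<s [set A | exists (j : 'I_p) (B : set R), measurable B /\ A = x j @^-1` B] >>.

Variable P : probability T R.

Definition Sigma {p : nat} (x : 'I_p -> T -> R) : 'M[R]_p :=
  \matrix_(i, j) fine (\int[P]_w (x i w * x j w)%:E).

Definition Qo {p : nat} (x : 'I_p -> T -> R) (eps : T -> R) (beta : 'cV[R]_p)
  (b : 'cV[R]_p) : R :=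
  fine (\int[P]_w ((xmul x beta w + eps w - xmul x b w) ^+ 2)%:E) / p%:R.

End Defs.

(* Main.v *)
Require Import Defs.
From HB Require Import structures.
From mathcomp Require Import all_boot all_order all_algebra.
From mathcomp Require Import all_classical all_reals all_analysis.
From mathcomp Require Import ring lra.
Import Order.TTheory GRing.Theory Num.Theory.
Import measurable_realfun HBNNSimple.
Import numFieldNormedType.Exports.
Local Open Scope classical_set_scope.
Local Open Scope ring_scope.


Section Elem.
Context (R : realType) (d0 : measure_display) (T : measurableType d0).

Lemma sq_le_pow (d t : R) : 2 < d -> t ^+ 2 <= 1 + `|t| `^ d.
Proof.
move=> d2.
have -> : t ^+ 2 = `|t| ^+ 2 by rewrite real_normK // num_real.
have [t1|t1] := lerP `|t| 1.
  have h1 : `|t| ^+ 2 <= 1 by rewrite expr_le1.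
  have := powR_ge0 `|t| d; lra.
rewrite -powR_mulrn //.
have : `|t| `^ 2%:R <= `|t| `^ d by apply: ler_powR; [exact: ltW | exact: ltW].
lra.
Qed.

Lemma xmulB p (x : 'I_p -> T -> R) u v w :
  xmul x (u - v) w = xmul x u w - xmul x v w.
Proof. by rewrite /xmul -sumrB; apply: eq_bigr => j _; rewrite !mxE mulrBr. Qed.

Lemma xmulZ p (x : 'I_p -> T -> R) c v w :
  xmul x (c *: v) w = c * xmul x v w.
Proof. by rewrite /xmul mulr_sumr; apply: eq_bigr => j _; rewrite !mxE mulrCA. Qed.

Lemma xmul_meas p (x : 'I_p -> T -> R) v :
  (forall j, measurable_fun setT (x j)) -> measurable_fun setT (xmul x v).
Proof.
by move=> mx; apply: measurable_sum => j; apply: measurable_funM.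
Qed.

End Elem.




Section Integ.
Context (R : realType) (d0 : measure_display) (T : measurableType d0) (P : probability T R).
Context (B d : R) (B0 : 0 < B) (d2 : 2 < d).

Lemma sq_int_bound (f : T -> R) : measurable_fun setT f ->
  (\int[P]_w (`|f w| `^ d)%:E <= B%:E)%E ->
  (\int[P]_w ((f w)^+2)%:E <= (1+B)%:E)%E /\
  P.-integrable setT (fun w => ((f w)^+2)%:E).
Proof.
move=> mf hB.
have mfd : measurable_fun setT (fun w => `|f w| `^ d).
  apply: (measurableT_comp (measurable_powR _)).
  by apply: measurableT_comp => //; exact: normr_measurable.
have mf2 : measurable_fun setT (fun w => (f w)^+2).
  exact: measurable_funX.
have le1 : (\int[P]_w ((f w)^+2)%:E <= (1+B)%:E)%E.
  apply: (le_trans (ge0_le_integral _ _ _ _ (f2 := fun w => (1 + `|f w| `^ d)%:E) _ _)) => //.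
  - by move=> w _; rewrite lee_fin sqr_ge0.
  - exact/measurable_EFinP.
  - by apply/measurable_EFinP; apply: measurable_funD => //; exact: measurable_cst.
  - by move=> w _; rewrite lee_fin sq_le_pow.
  under eq_integral do rewrite EFinD.
  rewrite (ge0_integralD _ _ (f1 := fun _ => 1%:E) _ (measurable_cst _)); first last.
  - exact/measurable_EFinP.
  - by move=> w _; rewrite lee_fin powR_ge0.
  - by move=> w _; rewrite lee_fin.
  - by [].
  rewrite (integral_cst P measurableT) [X in (X + _)%E](_ : _ = 1%E); last first.
    by rewrite mul1e; exact: probability_setT.
  rewrite EFinD.
  by rewrite leeD2l.
split => //; apply/integrableP; split; first exact/measurable_EFinP.
under eq_integral do rewrite gee0_abs ?lee_fin ?sqr_ge0 //.
exact: (le_lt_trans le1 (ltry _)).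
Qed.


Context (p : nat) (x : 'I_p -> T -> R).
Hypothesis mx : forall j, measurable_fun setT (x j).
Hypothesis hd : forall tau, unit_sphere tau ->
  (\int[P]_w (`|xmul x tau w| `^ d)%:E <= B%:E)%E.
Hypothesis h2 : forall tau, unit_sphere tau ->
  ((B^-1)%:E <= \int[P]_w ((xmul x tau w) ^+ 2)%:E)%E.

Lemma xmul_meas' v : measurable_fun setT (xmul x v).
Proof. by apply: measurable_sum => j; apply: measurable_funM. Qed.

Lemma sqnorm_ge0 {n} (v : 'cV[R]_n) : 0 <= sqnorm v.
Proof. by apply: sumr_ge0 => i _; exact: sqr_ge0. Qed.

Lemma quad_bounds v :
  P.-integrable setT (fun w => ((xmul x v w)^+2)%:E) /\
  sqnorm v / B <= Rintegral P setT (fun w => (xmul x v w)^+2) <= (1+B) * sqnorm v.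
Proof.
have s0 := sqnorm_ge0 v.
have [sz|spos] := eqVneq (sqnorm v) 0.
  have vz : forall i, v i 0 = 0.
    move=> i; apply/eqP; rewrite -sqrf_eq0; apply/eqP.
    by move: sz; rewrite /sqnorm => /psumr_eq0P; apply => // j _; exact: sqr_ge0.
  have xz : forall w, xmul x v w = 0.
    by move=> w; rewrite /xmul big1 // => j _; rewrite vz mulr0.
  have fz : (fun w => ((xmul x v w)^+2)%:E) = cst 0%E.
    by apply/funext => w; rewrite xz expr0n.
  rewrite fz sz mul0r mulr0; split; first exact: integrable0.
  have -> : Rintegral P setT (fun w => (xmul x v w)^+2) = 0.
    by rewrite /Rintegral fz integral0.
  by rewrite lexx.
have sp : 0 < sqnorm v by rewrite lt_def spos s0.
set s := sqnorm v in s0 sp spos *.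
set r := Num.sqrt s.
have rp : 0 < r by rewrite sqrtr_gt0.
set tau := r^-1 *: v.
have tau1 : unit_sphere tau.
  rewrite /unit_sphere /= /sqnorm.
  under eq_bigr do rewrite mxE exprMn.
  by rewrite -mulr_sumr -/(sqnorm v) -/s exprVn sqr_sqrtr // mulVf.
have vtau : forall w, (xmul x v w)^+2 = s * (xmul x tau w)^+2.
  move=> w; rewrite xmulZ exprMn exprVn sqr_sqrtr // mulrA mulfV // mul1r.
  by [].
have [ub it] := sq_int_bound _ (xmul_meas' tau) (hd tau tau1).
have lb := h2 tau tau1.
have it' : P.-integrable setT (fun w => ((xmul x v w)^+2)%:E).
  apply: (eq_integrable measurableT _ _ _ (integrableZl measurableT s it)) => w _.
  by rewrite vtau EFinM.
split => //.
have -> : Rintegral P setT (fun w => (xmul x v w)^+2) =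
          s * Rintegral P setT (fun w => (xmul x tau w)^+2).
  rewrite -RintegralZl //; apply: eq_Rintegral => w _; exact: vtau.
have fin := integrable_fin_num measurableT it.
move: ub lb; rewrite -(fineK fin) !lee_fin => ub lb.
rewrite /Rintegral; apply/andP; split.
  by rewrite ler_pM2l.
by rewrite [X in _ <= X]mulrC ler_pM2l.
Qed.

End Integ.


Section Key.
Context (R : realType) (d0 : measure_display) (T : measurableType d0) (P : probability T R).
Context (G : set (set T)) (X : T -> R).
Hypothesis mX : measurable_fun setT X.
Hypothesis GX : forall B, measurable B -> G (X @^-1` B).
Context (e1 e2 : T -> R).
Hypothesis me1 : measurable_fun setT e1.
Hypothesis me2 : measurable_fun setT e2.
Hypothesis e10 : forall w, 0 <= e1 w.
Hypothesis e20 : forall w, 0 <= e2 w.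
Hypothesis ie1 : P.-integrable setT (EFin \o e1).
Hypothesis ie2 : P.-integrable setT (EFin \o e2).
Hypothesis he : forall A, G A ->
  (\int[P]_(w in A) (e1 w)%:E = \int[P]_(w in A) (e2 w)%:E)%E.

Let sfun_decomp (h : {nnsfun R >-> R}) : exists n (c : 'I_n -> R) (S : 'I_n -> set R),
  (forall i, measurable (S i)) /\ forall (e : T -> R),
  measurable_fun setT e -> P.-integrable setT (EFin \o e) ->
  (\int[P]_w (h (X w) * e w)%:E =
   \sum_(i < n) (c i)%:E * \int[P]_(w in X @^-1` (S i)) (e w)%:E)%E.
Proof.
have := fimfunEord h.
move: (fset_set _) => s hE.
exists (size (finmap.enum_fset s)), (fun i => (finmap.enum_fset s)`_i),
  (fun i => h @^-1` [set (finmap.enum_fset s)`_i]).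
split; first by move=> i; exact: measurable_funPTI.
move=> e me ie.
under eq_integral do rewrite (hE (X _)) mulr_suml -sumEFin.
rewrite integral_sum //; last first.
  move=> i.
  have mS : measurable (X @^-1` (h @^-1` [set (finmap.enum_fset s)`_i])).
    by rewrite -[X in measurable X]setTI; apply: mX => //; exact: measurable_funPTI.
  apply: (eq_integrable measurableT _ _ _ (integrableZl measurableT
           ((finmap.enum_fset s)`_i) (_ : P.-integrable setT (fun w =>
              (\1_(X @^-1` (h @^-1` [set (finmap.enum_fset s)`_i])) w * e w)%:E)))).
    by move=> w _; rewrite -EFinM mulrA.
  apply: (le_integrable measurableT _ _ ie).
    by apply/measurable_EFinP; apply: measurable_funM => //; exact: measurable_indic.
  move=> w _; rewrite /= lee_fin normrM.
  rewrite indicE; case: (w \in _); rewrite ?normr1 ?normr0 ?mul1r ?mul0r //.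
apply: eq_bigr => i _.
set S := X @^-1` (h @^-1` [set (finmap.enum_fset s)`_i]).
have mS : measurable S.
  by rewrite -[X in measurable X]setTI; apply: mX => //; exact: measurable_funPTI.
rewrite (_ : (fun w => _) = (fun w => (((finmap.enum_fset s)`_i)%:E *
              (\1_S w * e w)%:E)%E)); last first.
  by apply/funext => w; rewrite -EFinM mulrA !indicE /S.
rewrite integralZl //; last first.
  apply: (le_integrable measurableT _ _ ie).
    by apply/measurable_EFinP; apply: measurable_funM => //; exact: measurable_indic.
  move=> w _; rewrite /= lee_fin normrM.
  rewrite indicE; case: (w \in _); rewrite ?normr1 ?normr0 ?mul1r ?mul0r //.
congr (_ * _)%E.
rewrite [RHS]integral_mkcond; apply: eq_integral => w _.
rewrite /patch indicE; case: (w \in S) => /=; first by rewrite mul1r.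
by rewrite mul0r.
Qed.

Lemma key_sfun (h : {nnsfun R >-> R}) :
  (\int[P]_w (h (X w) * e1 w)%:E = \int[P]_w (h (X w) * e2 w)%:E)%E.
Proof.
have [n [c [S [mS hS]]]] := sfun_decomp h.
rewrite (hS _ me1 ie1) (hS _ me2 ie2).
by apply: eq_bigr => i _; congr (_ * _)%E; apply: he; apply: GX.
Qed.


Lemma key_g (g : R -> R) : measurable_fun setT g -> (forall t, 0 <= g t) ->
  (\int[P]_w (g (X w) * e1 w)%:E = \int[P]_w (g (X w) * e2 w)%:E)%E.
Proof.
move=> mg g0.
have mG : measurable_fun setT (EFin \o g) by exact/measurable_EFinP.
pose hn := nnsfun_approx measurableT mG.
have cv : forall t : R, ((fun n => hn n t : R) @ \oo --> (g t : R)).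
  move=> t; have := cvg_nnsfun_approx measurableT mG (fun t _ => g0 t) (x:=t) Logic.I.
  by move/fine_cvg.
have MC : forall e : T -> R, measurable_fun setT e -> (forall w, 0 <= e w) ->
   (\int[P]_w (g (X w) * e w)%:E =
    limn (fun n => \int[P]_w (hn n (X w) * e w)%:E))%E.
  move=> e me e0.
  rewrite -monotone_convergence //.
  - apply: eq_integral => w _; apply/esym/cvg_lim => //.
    apply/fine_cvgP; split; first exact: nearW.
    exact: cvgMl (cv (X w)).
  - move=> n; apply/measurable_EFinP; apply: measurable_funM => //.
    exact: measurableT_comp (measurable_funPT _) mX.
  - by move=> n w _; rewrite lee_fin mulr_ge0 // fun_ge0.
  - move=> w _ m n mn; rewrite lee_fin ler_wpM2r //.
    by have /lefP := nd_nnsfun_approx measurableT mG mn; apply.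
rewrite (MC _ me1 e10) (MC _ me2 e20); congr (limn _); apply/funext => n.
exact: key_sfun.
Qed.

End Key.



Section Eps.
Context (R : realType) (d0 : measure_display) (T : measurableType d0) (P : probability T R).
Context (p : nat) (x : 'I_p -> T -> R) (eps : T -> R).
Hypothesis mx : forall j, measurable_fun setT (x j).
Hypothesis meps : measurable_fun setT eps.
Hypothesis ieps : P.-integrable setT (fun w => (eps w)%:E).
Hypothesis hcond : forall A, sigma_x x A -> (\int[P]_(w in A) (eps w)%:E = 0)%E.

Lemma sx_gen j (S : set R) : measurable S -> sigma_x x (x j @^-1` S).
Proof. by move=> mS; apply: sub_sigma_algebra; exists j, S. Qed.

Lemma sx_T : sigma_x x setT.
Proof.
have [h0 hC _] := smallest_sigma_algebra setT
  [set A | exists (j : 'I_p) (S : set R), measurable S /\ A = x j @^-1` S].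
by move: (hC _ h0); rewrite setD0.
Qed.

Lemma sx_meas A : sigma_x x A -> measurable A.
Proof.
apply: smallest_sub => //; first exact: sigma_algebra_measurable.
move=> _ [j [S [mS ->]]]; rewrite -[X in measurable X]setTI.
exact: mx.
Qed.

Let e1 := fun w => (eps w + `|eps w|) / 2.
Let e2 := fun w => (`|eps w| - eps w) / 2.

Let mabs (f : T -> R) : measurable_fun setT f -> measurable_fun setT (fun w => `|f w|).
Proof. by move=> mf; apply: measurableT_comp => //; exact: normr_measurable. Qed.

Let me1 : measurable_fun setT e1.
Proof. by apply: measurable_funM => //; apply: measurable_funD => //; exact: mabs. Qed.
Let me2 : measurable_fun setT e2.
Proof. by apply: measurable_funM => //; apply: measurable_funB => //; exact: mabs. Qed.

Let epsE w : eps w = e1 w - e2 w.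
Proof. by rewrite /e1 /e2; field. Qed.

Let e10 w : 0 <= e1 w.
Proof. have h1 := ler_norm (eps w); have h2 := ler_norm (- eps w); rewrite normrN in h2. rewrite /e1; lra. Qed.
Let e20 w : 0 <= e2 w.
Proof. have h1 := ler_norm (eps w); have h2 := ler_norm (- eps w); rewrite normrN in h2. rewrite /e2; lra. Qed.

Let ie1 : P.-integrable setT (EFin \o e1).
Proof.
apply: (le_integrable measurableT _ _ ieps); first exact/measurable_EFinP.
move=> w _; rewrite /= lee_fin ger0_norm // /e1.
have h1 := ler_norm (eps w); have h2 := ler_norm (- eps w); rewrite normrN in h2; lra.
Qed.
Let ie2 : P.-integrable setT (EFin \o e2).
Proof.
apply: (le_integrable measurableT _ _ ieps); first exact/measurable_EFinP.
move=> w _; rewrite /= lee_fin ger0_norm // /e2.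
have h1 := ler_norm (eps w); have h2 := ler_norm (- eps w); rewrite normrN in h2; lra.
Qed.

Let he A : sigma_x x A ->
  (\int[P]_(w in A) (e1 w)%:E = \int[P]_(w in A) (e2 w)%:E)%E.
Proof.
move=> sA; have mA := sx_meas A sA.
have i1 := integrableS measurableT mA (@subsetT _ _) ie1.
have i2 := integrableS measurableT mA (@subsetT _ _) ie2.
have := hcond A sA.
rewrite (eq_integral (fun w => (e1 w)%:E - (e2 w)%:E)%E); last first.
  by move=> w _; rewrite epsE EFinB.
rewrite (integralB_EFin mA i1 i2) => /eqP.
rewrite -(fineK (integrable_fin_num mA i1)) -(fineK (integrable_fin_num mA i2)).
by rewrite -EFinB eqe subr_eq0 => /eqP ->.
Qed.


Lemma xeps0 j : P.-integrable setT (fun w => (x j w * eps w)%:E) ->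
  (\int[P]_w (x j w * eps w)%:E = 0)%E.
Proof.
move=> ixe.
set X := x j.
have mX : measurable_fun setT X := mx j.
pose gp := fun t : R => (t + `|t|) / 2.
pose gn := fun t : R => (`|t| - t) / 2.
have gp0 t : 0 <= gp t.
  have h1 := ler_norm t; have h2 := ler_norm (- t); rewrite normrN in h2; rewrite /gp; lra.
have gn0 t : 0 <= gn t.
  have h1 := ler_norm t; have h2 := ler_norm (- t); rewrite normrN in h2; rewrite /gn; lra.
have mid : measurable_fun [set: R] (fun t : R => t) := @measurable_id _ _ setT.
have mab : measurable_fun [set: R] (fun t : R => `|t|) := @normr_measurable _ setT.
have mgp : measurable_fun setT gp.
  by apply: measurable_funM => //; apply: measurable_funD.
have mgn : measurable_fun setT gn.
  by apply: measurable_funM => //; apply: measurable_funB.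
have K g := key_g _ _ _ P (sigma_x x) X mX (sx_gen j) e1 e2 me1 me2 e10 e20 ie1 ie2 he g.
have Kp := K gp mgp gp0.
have Kn := K gn mgn gn0.
pose f1 := fun w => gp (X w) * e1 w + gn (X w) * e2 w.
pose f2 := fun w => gp (X w) * e2 w + gn (X w) * e1 w.
have f1E w : f1 w = (X w * eps w + `|X w * eps w|) / 2.
  by rewrite /f1 /gp /gn /e1 /e2 normrM; field.
have f2E w : f2 w = (`|X w * eps w| - X w * eps w) / 2.
  by rewrite /f2 /gp /gn /e1 /e2 normrM; field.
have XE w : X w * eps w = f1 w - f2 w by rewrite f1E f2E; field.
have mXe : measurable_fun setT (fun w => X w * eps w) by apply: measurable_funM.
have mf1 : measurable_fun setT f1.
  by apply: measurable_funD; apply: measurable_funM => //; exact: measurableT_comp.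
have mf2 : measurable_fun setT f2.
  by apply: measurable_funD; apply: measurable_funM => //; exact: measurableT_comp.
have if1 : P.-integrable setT (EFin \o f1).
  apply: (le_integrable measurableT _ _ ixe); first exact/measurable_EFinP.
  move=> w _; rewrite /= lee_fin f1E.
  have h1 := ler_norm (X w * eps w); have h2 := ler_norm (- (X w * eps w)).
  rewrite normrN in h2.
  rewrite ger0_norm; lra.
have if2 : P.-integrable setT (EFin \o f2).
  apply: (le_integrable measurableT _ _ ixe); first exact/measurable_EFinP.
  move=> w _; rewrite /= lee_fin f2E.
  have h1 := ler_norm (X w * eps w); have h2 := ler_norm (- (X w * eps w)).
  rewrite normrN in h2.
  rewrite ger0_norm; lra.
rewrite (eq_integral (fun w => (f1 w)%:E - (f2 w)%:E)%E); last first.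
  by move=> w _; rewrite XE EFinB.
rewrite (integralB_EFin measurableT if1 if2).
have -> : (\int[P]_w (f2 w)%:E = \int[P]_w (f1 w)%:E)%E.
  rewrite /f1 /f2.
  under eq_integral do rewrite EFinD.
  under [in RHS]eq_integral do rewrite EFinD.
  have m1 (g : R -> R) (e : T -> R) : measurable_fun setT g -> measurable_fun setT e ->
    measurable_fun setT (fun w => (g (X w) * e w)%:E).
    move=> mg me; apply/measurable_EFinP; apply: measurable_funM => //.
    exact: measurableT_comp.
  rewrite ge0_integralD //; first last.
  - exact: m1.
  - by move=> w _; rewrite lee_fin mulr_ge0.
  - exact: m1.
  - by move=> w _; rewrite lee_fin mulr_ge0.
  rewrite ge0_integralD //; first last.
  - exact: m1.
  - by move=> w _; rewrite lee_fin mulr_ge0.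
  - exact: m1.
  - by move=> w _; rewrite lee_fin mulr_ge0.
  by rewrite Kp Kn.
exact: subee (integrable_fin_num measurableT if1).
Qed.

End Eps.



Section RSum.
Context (R : realType) (d0 : measure_display) (T : measurableType d0) (P : probability T R).

Lemma integrable_Rsum (I : Type) (s : seq I) (f : I -> T -> R) :
  (forall i, P.-integrable setT (EFin \o f i)) ->
  P.-integrable setT (EFin \o (fun w => \sum_(i <- s) f i w)).
Proof.
move=> hf; apply: (eq_integrable measurableT _ _ _ (integrable_sum measurableT s
  (P := xpredT) (h := fun i w => (f i w)%:E) (fun i _ => hf i))).
by move=> w _; rewrite sumEFin.
Qed.

Lemma Rint_sum (I : Type) (s : seq I) (f : I -> T -> R) :
  (forall i, P.-integrable setT (EFin \o f i)) ->
  Rintegral P setT (fun w => \sum_(i <- s) f i w) =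
  \sum_(i <- s) Rintegral P setT (f i).
Proof.
move=> hf; elim: s => [|i s IH].
  rewrite big_nil (eq_Rintegral _ (g := fun _ => 0)); last by move=> w _; rewrite big_nil.
  by rewrite Rintegral_cst // mul0r.
rewrite big_cons -IH (eq_Rintegral _ (g := fun w => f i w + \sum_(j <- s) f j w)).
  by rewrite RintegralD //; exact: integrable_Rsum.
by move=> w _; rewrite big_cons.
Qed.

Lemma integrable_RZ (c : R) (f : T -> R) :
  P.-integrable setT (EFin \o f) -> P.-integrable setT (EFin \o (fun w => c * f w)).
Proof.
move=> hf; apply: (eq_integrable measurableT _ _ _ (integrableZl measurableT c hf)).
by move=> w _; rewrite /= EFinM.
Qed.

End RSum.

Lemma xmul_delta (R : realType) (d0 : measure_display) (T : measurableType d0)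
  p (x : 'I_p -> T -> R) j w : xmul x (delta_mx j 0) w = x j w.
Proof.
rewrite /xmul (bigD1 j) //= mxE !eqxx mulr1 big1 ?addr0 // => i ij.
by rewrite mxE (negbTE ij) mulr0.
Qed.

Lemma sqnormN (R : realType) n (v : 'cV[R]_n) : sqnorm (- v) = sqnorm v.
Proof. by apply: eq_bigr => i _; rewrite mxE sqrrN. Qed.

Section Main.
Context (R : realType) (d0 : measure_display) (T : measurableType d0) (P : probability T R).
Context (B d : R) (B0 : 0 < B) (d2 : 2 < d).
Context (p : nat) (x : 'I_p -> T -> R) (eps : T -> R).
Hypothesis mx : forall j, measurable_fun setT (x j).
Hypothesis meps : measurable_fun setT eps.
Hypothesis ieps : P.-integrable setT (fun w => (eps w)%:E).
Hypothesis hcond : forall A, sigma_x x A -> (\int[P]_(w in A) (eps w)%:E = 0)%E.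
Hypothesis hepsd : forall A, sigma_x x A ->
  (\int[P]_(w in A) (`|eps w| `^ d)%:E <= B%:E * P A)%E.
Hypothesis hd : forall tau, unit_sphere tau ->
  (\int[P]_w (`|xmul x tau w| `^ d)%:E <= B%:E)%E.
Hypothesis h2 : forall tau, unit_sphere tau ->
  ((B^-1)%:E <= \int[P]_w ((xmul x tau w) ^+ 2)%:E)%E.

Let QB v := quad_bounds _ _ _ P B d d2 p x mx hd h2 v.

Let ieps2 : P.-integrable setT (EFin \o (fun w => (eps w)^+2)).
Proof.
have h : (\int[P]_w (`|eps w| `^ d)%:E <= B%:E)%E.
  apply: (le_trans (hepsd _ (sx_T _ _ _ _ x))).
  rewrite [X in (_ * X)%E](_ : _ = 1%E) ?mule1 //.
  exact: probability_setT.
exact: (sq_int_bound _ _ _ P B d d2 eps meps h).2.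
Qed.

Let ix2 j : P.-integrable setT (EFin \o (fun w => (x j w)^+2)).
Proof.
have [h _] := QB (delta_mx j 0).
apply: (eq_integrable measurableT _ _ _ h) => w _.
by rewrite /= xmul_delta.
Qed.

Let le_prod (a b : R) : `|a * b| <= a ^+ 2 + b ^+ 2.
Proof.
rewrite normrM -(real_normK (num_real a)) -(real_normK (num_real b)).
have := normr_ge0 a; have := normr_ge0 b; nra.
Qed.

Let iprod (f g : T -> R) : measurable_fun setT f -> measurable_fun setT g ->
  P.-integrable setT (EFin \o (fun w => (f w)^+2)) ->
  P.-integrable setT (EFin \o (fun w => (g w)^+2)) ->
  P.-integrable setT (EFin \o (fun w => f w * g w)).
Proof.
move=> mf mg hf hg.
apply: (le_integrable measurableT _ _ (integrableD measurableT hf hg)).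
  by apply/measurable_EFinP; apply: measurable_funM.
move=> w _; rewrite /= lee_fin.
rewrite (@ger0_norm _ (f w ^+ 2 + g w ^+ 2)) ?addr_ge0 ?sqr_ge0 //; exact: le_prod.
Qed.

Let ixx i k : P.-integrable setT (EFin \o (fun w => x i w * x k w)).
Proof. exact: iprod. Qed.

Let ixe j : P.-integrable setT (EFin \o (fun w => x j w * eps w)).
Proof. exact: iprod. Qed.

Lemma wsq_eq v : wsqnorm (Sigma P x) v = Rintegral P setT (fun w => (xmul x v w)^+2).
Proof.
rewrite (eq_Rintegral _ (g := fun w => \sum_(k < p) \sum_(i < p)
            (v i 0 * v k 0) * (x i w * x k w))); last first.
  move=> w _; rewrite expr2 /xmul mulr_suml exchange_big /=.
  apply: eq_bigr => k _; rewrite mulr_sumr; apply: eq_bigr => i _.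
  by ring.
rewrite Rint_sum; last first.
  by move=> k; apply: integrable_Rsum => i; exact: integrable_RZ.
rewrite /wsqnorm mxE; apply: eq_bigr => k _.
rewrite Rint_sum; last by move=> i; exact: integrable_RZ.
rewrite mxE mulr_suml; apply: eq_bigr => i _.
rewrite RintegralZl //.
by rewrite !mxE /Rintegral; ring.
Qed.

Let ixv v : P.-integrable setT (EFin \o (fun w => (xmul x v w)^+2)).
Proof. exact: (QB v).1. Qed.

Let iRD (f g : T -> R) : P.-integrable setT (EFin \o f) ->
  P.-integrable setT (EFin \o g) -> P.-integrable setT (EFin \o (fun w => f w + g w)).
Proof.
move=> hf hg; apply: (eq_integrable measurableT _ _ _ (integrableD measurableT hf hg)).
by move=> w _; rewrite /= EFinD.
Qed.

Lemma rint_xeps v : Rintegral P setT (fun w => xmul x v w * eps w) = 0.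
Proof.
rewrite (eq_Rintegral _ (g := fun w => \sum_(j < p) v j 0 * (x j w * eps w))); last first.
  by move=> w _; rewrite /xmul mulr_suml; apply: eq_bigr => j _; ring.
rewrite Rint_sum; last by move=> j; exact: integrable_RZ.
apply: big1 => j _; rewrite RintegralZl //.
by rewrite /Rintegral (xeps0 _ _ _ P p x eps mx meps ieps hcond j (ixe j)) mulr0.
Qed.

Lemma rint_eps_sq v : Rintegral P setT (fun w => (eps w - xmul x v w)^+2) =
  Rintegral P setT (fun w => (eps w)^+2) + wsqnorm (Sigma P x) v.
Proof.
rewrite wsq_eq.
have mxv := xmul_meas' _ _ _ p x mx v.
have ixve : P.-integrable setT (EFin \o (fun w => xmul x v w * eps w)).
  exact: iprod.
rewrite (eq_Rintegral _ (g := fun w => ((eps w)^+2 + (xmul x v w)^+2) -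
                                    2 * (xmul x v w * eps w))); last first.
  by move=> w _; ring.
rewrite RintegralB //; last 2 first.
- exact: iRD.
- exact: integrable_RZ.
rewrite (RintegralD measurableT ieps2 (ixv v)).
by rewrite (RintegralZl _ measurableT ixve) rint_xeps mulr0 subr0.
Qed.

End Main.



Theorem proposition2 (R : realType) (B d : R) (M : nat) :
  0 < B -> 2 < d ->
  exists c : R, 0 < c /\
  forall (d0 : measure_display) (T : measurableType d0) (P : probability T R)
    (p k : nat) (x : 'I_p -> T -> R) (eps : T -> R) (beta : 'cV[R]_p)
    (Delta : set 'cV[R]_k),
    (1 <= k)%N -> (k <= p)%N ->
    (* x measurable, integrable, mean zero *)
    (forall j, measurable_fun setT (x j)) ->
    (forall j, P.-integrable setT (fun w => (x j w)%:E)) ->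
    (forall j, (\int[P]_w (x j w)%:E = 0)%E) ->
    measurable_fun setT eps ->
    (* (i) E[eps | x] = 0 a.s. *)
    P.-integrable setT (fun w => (eps w)%:E) ->
    (forall A, sigma_x x A -> (\int[P]_(w in A) (eps w)%:E = 0)%E) ->
    (* (ii) E[|eps|^d | x] <= B a.s. *)
    (forall A, sigma_x x A ->
       (\int[P]_(w in A) (`|eps w| `^ d)%:E <= B%:E * P A)%E) ->
    (* E|x tau|^d <= B and B^-1 <= E|x tau|^2 for tau in S_p *)
    (forall tau, unit_sphere tau ->
       (\int[P]_w (`|xmul x tau w| `^ d)%:E <= B%:E)%E) ->
    (forall tau, unit_sphere tau ->
       ((B^-1)%:E <= \int[P]_w ((xmul x tau w) ^+ 2)%:E)%E) ->
    (* (a) a minimiser of Q_o over M_k x Delta solves the weighted problem *)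
    (forall m delta, Mk p k M m -> Delta delta ->
       (forall m' delta', Mk p k M m' -> Delta delta' ->
          Qo P x eps beta (m *m delta) <= Qo P x eps beta (m' *m delta')) ->
       (forall m' delta', Mk p k M m' -> Delta delta' ->
          wsqnorm (Sigma P x) (m *m delta - beta)
            <= wsqnorm (Sigma P x) (m' *m delta' - beta)))
    /\
    (* (b) ||b_k||^2 asymp min weighted objective, constants uniform *)
    (forall mo deltao, Mk p k M mo -> Delta deltao ->
       (forall m delta, Mk p k M m -> Delta delta ->
          sqnorm (mo *m deltao - beta) <= sqnorm (m *m delta - beta)) ->
       let bk := beta - mo *m deltao in
       let wmin := inf [set r | exists m delta, Mk p k M m /\ Delta delta /\
                          r = wsqnorm (Sigma P x) (m *m delta - beta)] in
       c^-1 * sqnorm bk <= wmin /\ wmin <= c * sqnorm bk).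
Proof.
move=> B0 d2.
exists (1 + B); split; first by lra.
move=> d0 T P p k x eps beta Delta k1 kp mx ix x0 meps ieps hcond hepsd hd h2.
have RE v := rint_eps_sq _ _ _ P B d d2 p x eps mx meps ieps hcond hepsd hd h2 v.
have QB v := quad_bounds _ _ _ P B d d2 p x mx hd h2 v.
have WE v := wsq_eq _ _ _ P B d d2 p x mx hd h2 v.
have p0 : (0 < p%:R :> R) by rewrite ltr0n; exact: leq_trans k1 kp.
have QoE b : Qo P x eps beta b =
   (Rintegral P setT (fun w => (eps w)^+2) + wsqnorm (Sigma P x) (b - beta)) / p%:R.
  rewrite -RE /Qo /Rintegral; congr (fine _ / _); apply: eq_integral => w _.
  by rewrite xmulB; congr (_%:E); ring.
split.
  move=> m delta Mm Dd hmin m' delta' Mm' Dd'.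
  by have := hmin m' delta' Mm' Dd'; rewrite !QoE ler_pM2r ?invr_gt0 // lerD2l.
move=> mo deltao Mo Do hmo bk wmin.
have sbk : sqnorm bk = sqnorm (mo *m deltao - beta) by rewrite /bk -opprB sqnormN.
rewrite /wmin; set S := [set r | _].
have Sne : S (wsqnorm (Sigma P x) (mo *m deltao - beta)) by exists mo, deltao.
have lbS : forall r, S r -> sqnorm (mo *m deltao - beta) / B <= r.
  move=> r [m [delta [Mm [Dd ->]]]].
  have /andP [h _] := (QB (m *m delta - beta)).2.
  rewrite WE; apply: (le_trans _ h); rewrite ler_pM2r ?invr_gt0 //; exact: hmo.
have s0 := sqnorm_ge0 _ (mo *m deltao - beta).
split.
  apply: lb_le_inf; first by exists (wsqnorm (Sigma P x) (mo *m deltao - beta)).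
  move=> r Sr; apply: le_trans (lbS r Sr).
  rewrite sbk mulrC ler_wpM2l // lef_pV2 ?posrE //; lra.
apply: le_trans (ge_inf _ Sne) _.
  exists 0 => r Sr; apply: le_trans (lbS r Sr).
  by rewrite divr_ge0 // ltW.
have /andP [_ h] := (QB (mo *m deltao - beta)).2.
by rewrite sbk WE.
Qed.
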